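(* Let $(\log\rho_i)_{i\in\mathbb Z}$ be i.i.d. real random variables with $\mathbb P[\log\rho_0>0]>0$ and $\mathbb P[\log\rho_0<0]>0$, let $V$ be the associated random walk defined below, and assume moreover $\liminf_{x\to+\infty}V(x)=-\infty$ almost surely. Let $h>0$. Then: (i) the processes $\big(V[m_1(h)-k]-V[m_1(h)],\ 0\le k\le m_1(h)\big)$ and $\big(V[m_1(h)+k]-V[m_1(h)],\ 0\le k\le T^\uparrow(h)-m_1(h)\big)$ are independent; (ii) the process $\big(V[m_1(h)+k]-V[m_1(h)],\ 0\le k\le T^\uparrow(h)-m_1(h)\big)$ is equal in law to $\big(V(k),\ 0\le k\le T_V([h,+\infty[)\big)$ conditioned on $\{T_V([h,+\infty[)<T_V(]-\infty,0[)\}$.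
   Context: $V(x)=\sum_{k=1}^x\log\rho_k$ for $x>0$, $V(0)=0$, $V(x)=-\sum_{k=x+1}^0\log\rho_k$ for $x<0$. $V^\uparrow(x)=\max_{0\le i\le j\le x}[V(j)-V(i)]$ for $x\in\mathbb N$; $T^\uparrow(h)=\min\{x\ge0:V^\uparrow(x)\ge h\}$; $m_1(h)=\min\{x\ge0:V(x)=\min_{[0,T^\uparrow(h)]}V\}$. For $A\subset\mathbb R$, $T_V(A)=\min\{x\ge1:V(x)\in A\}$. *)

(* Defs.v *)
From HB Require Import structures.
From mathcomp Require Import all_boot all_order all_algebra.
From mathcomp Require Import all_classical all_reals all_analysis.
Set Implicit Arguments. Unset Strict Implicit. Unset Printing Implicit Defensive.
Import Order.TTheory GRing.Theory Num.Theory.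
Local Open Scope classical_set_scope.
Local Open Scope ring_scope.

Section RW.
Context {R : realType}.

(** The random walk V associated to (log rho_i)_{i in Z}, given by lr = log rho:
    V(x) = sum_{k=1}^x lr k (x > 0), V 0 = 0, V(x) = - sum_{k=x+1}^0 lr k (x < 0). *)
Definition Vwalk (lr : int -> R) (x : int) : R :=
  match x with
  | Posz n => \sum_(1 <= k < n.+1) lr (k%:Z)
  | Negz n => - \sum_(0 <= k < n.+1) lr (- (k%:Z))
  end.

Definition Vn (lr : int -> R) (n : nat) : R := Vwalk lr (n%:Z).

Definition Vup (lr : int -> R) (x : nat) : R :=
  \big[Num.max/0]_(j < x.+1) \big[Num.max/0]_(i < j.+1) (Vn lr j - Vn lr i).

(** min { n : nat | p n }, with min of the empty set = +oo encoded as None *)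
Definition first_nat (p : pred nat) : option nat :=
  match pselect (exists n, p n) with
  | left H => Some (ex_minn H)
  | right _ => None
  end.

Definition Tup (lr : int -> R) (h : R) : option nat :=
  first_nat (fun x => h <= Vup lr x).

Definition minV (lr : int -> R) (t : nat) : R :=
  \big[Num.min/Vn lr 0]_(k < t.+1) Vn lr k.

Definition m1 (lr : int -> R) (h : R) : option nat :=
  obind (fun t => first_nat (fun x => Vn lr x == minV lr t)) (Tup lr h).

Definition TV_ge (lr : int -> R) (h : R) : option nat :=
  first_nat (fun x => (1 <= x)%N && (h <= Vn lr x)).
Definition TV_neg (lr : int -> R) : option nat :=
  first_nat (fun x => (1 <= x)%N && (Vn lr x < 0)).

Definition lt_opt (a b : option nat) : bool :=
  match a, b with
  | Some x, Some y => (x < y)%N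
  | Some _, None => true
  | None, _ => false
  end.

Definition left_path (lr : int -> R) (h : R) : option (seq R) :=
  match Tup lr h, m1 lr h with
  | Some _, Some m => Some [seq Vn lr (m - k) - Vn lr m | k <- iota 0 m.+1]
  | _, _ => None
  end.

Definition right_path (lr : int -> R) (h : R) : option (seq R) :=
  match Tup lr h, m1 lr h with
  | Some t, Some m => Some [seq Vn lr (m + k) - Vn lr m | k <- iota 0 (t - m).+1]
  | _, _ => None
  end.

Definition hit_path (lr : int -> R) (h : R) : option (seq R) :=
  match TV_ge lr h with
  | Some t => Some [seq Vn lr k | k <- iota 0 t.+1]
  | None => None
  end.

End RW.

Section Prob.
Context {d : measure_display} {T : measurableType d} {R : realType}.
Local Open Scope ereal_scope.

Definition cyl (n : nat) (B : nat -> set R) : set (seq R) :=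
  [set s | size s = n.+1 /\ forall k, (k <= n)%N -> B k (nth 0%R s k)].

Definition pev (X : T -> option (seq R)) (S : set (seq R)) : set T :=
  [set w | exists s, X w = Some s /\ S s].

(** Independence of two random finite paths: product rule on the pi-system of
    cylinder events (length fixed, coordinates in Borel sets), which generates
    the sigma-algebra of the disjoint union of the R^(n+1). *)
Definition paths_indep (P : probability T R) (X Y : T -> option (seq R)) : Prop :=
  forall (n1 n2 : nat) (B1 B2 : nat -> set R),
    (forall k, measurable (B1 k)) -> (forall k, measurable (B2 k)) ->
    P (pev X (cyl n1 B1) `&` pev Y (cyl n2 B2)) =
    P (pev X (cyl n1 B1)) * P (pev Y (cyl n2 B2)).

Definition cond_prob (P : probability T R) (E A : set T) : R :=
  (fine (P (E `&` A)) / fine (P A))%R.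

Definition path_law_cond (P : probability T R) (X Y : T -> option (seq R)) (A : set T)
  : Prop :=
  forall (n : nat) (B : nat -> set R), (forall k, measurable (B k)) ->
    fine (P (pev X (cyl n B))) = cond_prob P (pev Y (cyl n B)) A.

Definition mutual_indep (P : probability T R) (X : int -> T -> R) : Prop :=
  forall (I : seq int) (B : int -> set R), uniq I -> (forall i, measurable (B i)) ->
    P (\bigcap_(i in [set` I]) (X i @^-1` B i)) = \prod_(i <- I) P (X i @^-1` B i).

Definition ident_distr (P : probability T R) (X : int -> T -> R) : Prop :=
  forall (i : int) (B : set R), measurable B -> P (X i @^-1` B) = P (X 0%Z @^-1` B).

End Prob.

(* Main.v *)
Require Import Defs.
From HB Require Import structures.
From mathcomp Require Import all_boot all_order all_algebra.
From mathcomp Require Import all_classical all_reals all_analysis.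
Import Order.TTheory GRing.Theory Num.Theory.
Local Open Scope classical_set_scope.
Local Open Scope ring_scope.
From mathcomp Require Import ring lra.
From mathcomp Require Import zify.
Section Det.
Context {R : realType}.
Implicit Types (s u : nat -> R) (lr : int -> R).

Definition W s (n : nat) : R := \sum_(i < n) s i.
Definition sh (m : nat) s : nat -> R := fun i => s (m + i)%N.
Definition sl lr : nat -> R := fun i => lr (i.+1)%:Z.

Lemma W0 s : W s 0 = 0. Proof. by rewrite /W big_ord0. Qed.

Lemma W_sh s m k : W s (m + k) = W s m + W (sh m s) k.
Proof. by rewrite /W big_split_ord. Qed.

Lemma VnE lr n : Vn lr n = W (sl lr) n.
Proof.
rewrite /Vn /Vwalk /W /sl.
by rewrite (big_add1 _ _ 0 n.+1 xpredT (fun k => lr k%:Z)) /= big_mkord.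
Qed.

Lemma first_natP (p : pred nat) n :
  first_nat p = Some n <-> p n /\ forall k, (k < n)%N -> ~~ p k.
Proof.
rewrite /first_nat; case: pselect => [H|H].
  case: ex_minnP => m pm minm; split.
    move=> [<-]; split => // k km; apply/negP => pk.
    by have := minm _ pk; rewrite leqNgt km.
  move=> [pn nk]; congr Some; apply/eqP; rewrite eqn_leq minm //=.
  by rewrite leqNgt; apply/negP => /nk; rewrite pm.
split => // -[pn _]; exfalso; apply: H; by exists n.
Qed.

Lemma first_natN (p : pred nat) :
  first_nat p = None <-> forall n, ~~ p n.
Proof.
rewrite /first_nat; case: pselect => [H|H]; split => //.
- by move=> Hn; exfalso; case: H => n; apply/negP/Hn.
- by move=> _ n; apply/negP => pn; apply: H; exists n.
Qed.

Lemma first_natS (p : pred nat) n : p n -> exists m, first_nat p = Some m.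
Proof.
move=> pn; case E: (first_nat p) => [m|]; first by exists m.
by move/first_natN: E => /(_ n); rewrite pn.
Qed.

Lemma bigmax_ge (h : R) n (F : nat -> R) : 0 < h ->
  (h <= \big[Num.max/0]_(j < n) F j) <-> exists2 j, (j < n)%N & h <= F j.
Proof.
move=> hp; elim: n F => [|n IH] F.
  by rewrite big_ord0; split => [|[]//]; rewrite leNgt hp.
rewrite big_ord_recl /= le_max.
have -> : \big[Num.max/0]_(i < n) F (lift ord0 i) = \big[Num.max/0]_(i < n) F i.+1.
  by apply: eq_bigr => i _; rewrite lift0.
have IHF := IH (fun k => F k.+1); simpl in IHF; split.
  case/orP => [h0|/IHF [j jn hj]]; first by exists 0%N.
  by exists j.+1.
move=> [[|j] jn hj]; first by rewrite hj.
by apply/orP; right; apply/IHF; exists j.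
Qed.

Lemma bigmin_le (c : R) n (F : nat -> R) k : (k < n)%N ->
  \big[Num.min/c]_(i < n) F i <= F k.
Proof.
elim: n F k => [|n IH] F k //.
rewrite big_ord_recl /= ge_min.
have -> : \big[Num.min/c]_(i < n) F (lift ord0 i) = \big[Num.min/c]_(i < n) F i.+1.
  by apply: eq_bigr => i _; rewrite lift0.
case: k => [|k] kn; first by rewrite lexx.
by have := IH (fun k => F k.+1) k kn => /= ->; rewrite orbT.
Qed.

Lemma bigmin_att (c : R) n (F : nat -> R) :
  \big[Num.min/c]_(i < n) F i = c \/ exists2 k, (k < n)%N & \big[Num.min/c]_(i < n) F i = F k.
Proof.
elim: n F => [|n IH] F; first by rewrite big_ord0; left.
rewrite big_ord_recl /=.
have -> : \big[Num.min/c]_(i < n) F (lift ord0 i) = \big[Num.min/c]_(i < n) F i.+1.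
  by apply: eq_bigr => i _; rewrite lift0.
case: (leP (F 0%N) (\big[Num.min/c]_(i < n) F i.+1)) => H.
  by right; exists 0%N.
case: (IH (fun k => F k.+1)) => [->|[k kn ->]]; first by left.
by right; exists k.+1.
Qed.

Variable h : R.
Hypothesis hp : 0 < h.

Definition up s x := exists i j, [/\ (i <= j)%N, (j <= x)%N & h <= W s j - W s i].

Lemma VupE lr x : (h <= Vup lr x) <-> up (sl lr) x.
Proof.
have B1 := bigmax_ge h x.+1 (fun j => \big[Num.max/0]_(i < j.+1) (Vn lr j - Vn lr i)) hp.
rewrite /Vup; split.
  move/B1 => [j jx] /(bigmax_ge h j.+1 (fun i => Vn lr j - Vn lr i) hp) [i ij hij].
  by exists i, j; rewrite -!VnE; split.
move=> [i [j [ij jx hij]]]; apply/B1; exists j => //.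
by apply/(bigmax_ge h j.+1 (fun i => Vn lr j - Vn lr i) hp); exists i => //; rewrite !VnE.
Qed.

Lemma up_mono s x y : (x <= y)%N -> up s x -> up s y.
Proof. move=> xy [i [j [ij jx hij]]]; exists i, j; split => //; exact: leq_trans jx xy. Qed.

Lemma TupP lr t : Tup lr h = Some t <-> up (sl lr) t /\ forall x, (x < t)%N -> ~ up (sl lr) x.
Proof.
rewrite /Tup first_natP; split.
  by move=> [/VupE ht hn]; split => // x /hn /negP; rewrite VupE.
by move=> [ht hn]; split; [apply/VupE|move=> x /hn; rewrite -VupE => /negP].
Qed.

Lemma minV_le lr t k : (k <= t)%N -> minV lr t <= Vn lr k.
Proof. by move=> kt; apply: bigmin_le. Qed.

Lemma minV_att lr t : exists2 k, (k <= t)%N & minV lr t = Vn lr k.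
Proof.
rewrite /minV; case: (bigmin_att (Vn lr 0) t.+1 (Vn lr)) => [->|[k kt ->]].
  by exists 0%N.
by exists k.
Qed.

Lemma minV_eq lr t c : (forall k, (k <= t)%N -> c <= Vn lr k) ->
  (exists2 k, (k <= t)%N & Vn lr k = c) -> minV lr t = c.
Proof.
move=> H [k kt Ek]; subst c; apply/eqP; rewrite eq_le minV_le //=.
by have [k' k't ->] := minV_att lr t; apply: H.
Qed.

Definition LA s m := (forall j, (j < m)%N -> W s m < W s j) /\
  (forall i j, (i <= j)%N -> (j <= m)%N -> W s j - W s i < h).
Definition RA u n := (forall k, (k < n)%N -> 0 <= W u k /\ W u k < h) /\ h <= W u n.

Lemma D1 lr t m : (Tup lr h = Some t /\ m1 lr h = Some m) <->
  exists n, t = (m + n)%N /\ LA (sl lr) m /\ RA (sh m (sl lr)) n.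
Proof.
set s := sl lr.
have WE k : Vn lr k = W s k by rewrite VnE.
split.
  move=> [Ht]; rewrite /m1 Ht /= first_natP => -[/eqP Hm Hmin].
  move/TupP: Ht => [[i [j [ij jt hij]]] tmin].
  have mle k : (k <= t)%N -> W s m <= W s k.
    by move=> kt; rewrite -!WE Hm minV_le.
  have mt : (m <= t)%N.
    have [k kt Hk] := minV_att lr t; rewrite leqNgt; apply/negP => tm.
    by have := Hmin _ (leq_ltn_trans kt tm); rewrite Hk eqxx.
  have jt' : j = t.
    apply/eqP; rewrite eqn_leq jt /= leqNgt; apply/negP => jlt.
    by apply: (tmin j jlt); exists i, j; split.
  subst j.
  have hm : h <= W s t - W s m.
    apply: (le_trans hij); rewrite lerD2l lerN2; apply: mle; exact: leq_trans ij jt.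
  have mlt : (m < t)%N.
    rewrite ltn_neqAle mt andbT; apply/negP => /eqP mt'.
    by move: hm; rewrite mt' subrr leNgt hp.
  exists (t - m)%N; split; first by rewrite subnKC.
  split; split.
  - move=> j0 jm; have j0t : (j0 <= t)%N by apply: ltnW; exact: ltn_trans jm mlt.
    rewrite lt_neqAle mle // andbT; apply/negP => /eqP Ej.
    by have := Hmin _ jm; rewrite WE -Ej -WE Hm eqxx.
  - move=> i' j ij' jm; rewrite ltNge; apply/negP => hj.
    by apply: (tmin m mlt); exists i', j; split.
  - move=> k km.
    have mkt : (m + k < t)%N by rewrite -ltn_subRL.
    have := W_sh s m k => Ew.
    split.
      by rewrite -(lerD2l (W s m)) addr0 -Ew mle // ltnW.
    rewrite ltNge; apply/negP => hk; apply: (tmin _ mkt).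
    by exists m, (m + k)%N; split => //; [exact: leq_addr|rewrite Ew addrAC subrr add0r].
  - have := W_sh s m (t - m); rewrite subnKC; last exact: ltnW.
    move=> E.
    by move: hm; rewrite E addrAC subrr add0r.
move=> [n [-> [[LA1 LA2] [RA1 RA2]]]].
have Wge k : (k <= m + n)%N -> W s m <= W s k.
  move=> kt; case: (ltnP k m) => km; first exact/ltW/LA1.
  rewrite -(subnKC km) W_sh lerDl.
  case: (ltnP (k - m) n) => kn; first by case: (RA1 _ kn).
  have -> : (k - m = n)%N by apply/eqP; rewrite eqn_leq kn leq_subLR kt.
  exact: le_trans (ltW hp) RA2.
have Ht : Tup lr h = Some (m + n)%N.
  apply/TupP; split.
    by exists m, (m + n)%N; split => //; [exact: leq_addr|rewrite W_sh addrAC subrr add0r].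
  move=> x xt [i [j [ij jx hij]]].
  case: (leqP j m) => jm.
    by move: hij; rewrite leNgt (LA2 _ _ ij jm).
  have jt : (j < m + n)%N by exact: leq_ltn_trans jx xt.
  have Hi : W s m <= W s i by apply: Wge; rewrite ltnW // (leq_ltn_trans ij jt).
  have jmn : (j - m < n)%N by rewrite ltn_subLR // ltnW.
  have [_ hj] := RA1 _ jmn.
  have Ej := W_sh s m (j - m); rewrite subnKC in Ej; last exact: ltnW.
  rewrite Ej in hij.
  have : h <= W (sh m s) (j - m) by lra.
  by rewrite leNgt hj.
split => //; rewrite /m1 Ht /= first_natP.
have Hmin : minV lr (m + n) = W s m.
  apply: minV_eq => [k kt|]; first by rewrite WE Wge.
  by exists m; rewrite ?leq_addr ?WE.
split; first by rewrite Hmin WE.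
by move=> k km; rewrite Hmin WE; apply/negP => /eqP Ek; move: (LA1 _ km); rewrite Ek ltxx.
Qed.

End Det.
Section Ev.
Context {R : realType}.
Implicit Types (s u : nat -> R) (lr : int -> R).
Variable h : R.
Hypothesis hp : 0 < h.

Lemma cyl_map n m (f : nat -> R) (B : nat -> set R) :
  cyl n B [seq f k | k <- iota 0 m.+1] <-> m = n /\ forall k, (k <= n)%N -> B k (f k).
Proof.
change (size [seq f k | k <- iota 0 m.+1] = n.+1 /\ (forall k, (k <= n)%N ->
  B k (nth 0 [seq f k | k <- iota 0 m.+1] k)) <-> m = n /\ forall k, (k <= n)%N -> B k (f k)).
rewrite size_map size_iota; split.
  move=> [[mn] H]; subst m; split => // k kn; have := H k kn.
  by rewrite (nth_map 0%N) ?size_iota ?nth_iota.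
move=> [-> H]; split => // k kn.
by rewrite (nth_map 0%N) ?size_iota ?nth_iota // add0n; apply: H.
Qed.

Definition RAall u := exists n, RA h u n.
Definition RB n (B : nat -> set R) u := RA h u n /\ forall k, (k <= n)%N -> B k (W u k).

Lemma m1_some lr t : Tup lr h = Some t -> exists m, m1 lr h = Some m.
Proof.
move=> Ht; rewrite /m1 Ht /=.
have [k _ Hk] := minV_att lr t.
by apply: (first_natS (fun x => Vn lr x == minV lr t) k); rewrite /= Hk.
Qed.

Lemma left_ev lr n1 (B1 : nat -> set R) :
  (exists q, left_path lr h = Some q /\ cyl n1 B1 q) <->
  [/\ LA h (sl lr) n1, (forall k, (k <= n1)%N -> B1 k (W (sl lr) (n1 - k) - W (sl lr) n1))
    & RAall (sh n1 (sl lr))].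
Proof.
rewrite /left_path; split.
  case Ht: (Tup lr h) => [t|]; last by move=> [q []].
  case Hm: (m1 lr h) => [m|]; last by move=> [q []].
  move=> [q [[<-] /cyl_map [mn H]]]; subst m.
  have [n [_ [LA1 RA1]]] := (D1 h hp lr t n1).1 (conj Ht Hm).
  split => //; last by exists n.
  by move=> k kn; have := H k kn; rewrite !VnE.
move=> [LA1 H [n RA1]].
have [Ht Hm] := (D1 h hp lr (n1 + n) n1).2 (ex_intro _ n (conj erefl (conj LA1 RA1))).
rewrite Ht Hm; eexists; split; first by [].
by apply/cyl_map; split => // k kn; rewrite !VnE; apply: H.
Qed.

Lemma right_ev lr n2 (B2 : nat -> set R) :
  (exists q, right_path lr h = Some q /\ cyl n2 B2 q) <->
  exists m, LA h (sl lr) m /\ RB n2 B2 (sh m (sl lr)).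
Proof.
rewrite /right_path; split.
  case Ht: (Tup lr h) => [t|]; last by move=> [q []].
  case Hm: (m1 lr h) => [m|]; last by move=> [q []].
  move=> [q [[<-] /cyl_map [tn H]]].
  have [n [tE [LA1 RA1]]] := (D1 h hp lr t m).1 (conj Ht Hm).
  subst t; rewrite addKn in tn; subst n.
  exists m; split => //; split => // k kn; have := H k kn.
  by rewrite !VnE W_sh addrAC subrr add0r.
move=> [m [LA1 [RA1 H]]].
have [Ht Hm] := (D1 h hp lr (m + n2) m).2 (ex_intro _ n2 (conj erefl (conj LA1 RA1))).
rewrite Ht Hm; eexists; split; first by [].
apply/cyl_map; rewrite addKn; split => // k kn.
by rewrite !VnE W_sh addrAC subrr add0r; apply: H.
Qed.

Lemma joint_ev lr n1 n2 (B1 B2 : nat -> set R) :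
  ((exists q, left_path lr h = Some q /\ cyl n1 B1 q) /\
   (exists q, right_path lr h = Some q /\ cyl n2 B2 q)) <->
  [/\ LA h (sl lr) n1, (forall k, (k <= n1)%N -> B1 k (W (sl lr) (n1 - k) - W (sl lr) n1))
    & RB n2 B2 (sh n1 (sl lr))].
Proof.
rewrite left_ev right_ev; split.
  move=> [[LA1 H1 [n RA1]] [m [LA2 RB2]]].
  have [_ Hm] := (D1 h hp lr (n1 + n) n1).2 (ex_intro _ n (conj erefl (conj LA1 RA1))).
  have [_ Hm'] := (D1 h hp lr (m + n2) m).2 (ex_intro _ n2 (conj erefl (conj LA2 RB2.1))).
  by rewrite Hm in Hm'; case: Hm' => mE; subst m.
move=> [LA1 H1 RB2]; split; last by exists n1.
by split => //; exists n2; case: RB2.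
Qed.

Lemma TVge_P lr n : TV_ge lr h = Some n <->
  [/\ (1 <= n)%N, h <= W (sl lr) n & forall k, (k < n)%N -> W (sl lr) k < h].
Proof.
rewrite /TV_ge first_natP; split.
  move=> [/andP[n1 hn] H]; split => //; first by rewrite -VnE.
  move=> k kn; have := H k kn; rewrite negb_and -VnE -ltNge.
  case: k kn => [|k] kn /=; last by [].
  by rewrite VnE W0.
move=> [n1 hn H]; split; first by rewrite n1 VnE.
by move=> k kn; rewrite negb_and VnE -ltNge H ?orbT.
Qed.

Lemma cond_ev lr n : (TV_ge lr h = Some n /\ lt_opt (TV_ge lr h) (TV_neg lr)) <-> RA h (sl lr) n.
Proof.
rewrite TVge_P; split.
  move=> [[n1 hn H]]; rewrite (proj2 (TVge_P lr n)) //.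
  case Hneg: (TV_neg lr) => [m|] /= Hlt; split => // k kn; split; try exact: H.
  - move/first_natP: Hneg => [_ Hm]; have := Hm k (ltn_trans kn Hlt).
    case: k kn => [|k] kn; first by rewrite /= W0.
    by rewrite /= -VnE -leNgt.
  - move/first_natN: Hneg => /(_ k).
    case: k kn => [|k] kn; first by rewrite /= W0.
    by rewrite /= -VnE -leNgt.
move=> [H hn].
have n1 : (1 <= n)%N by case: n hn H => [|n] //; rewrite W0 leNgt hp.
have Hge : TV_ge lr h = Some n by apply/TVge_P; split => // k /H [].
split; first by split => // k /H [].
rewrite Hge; case Hneg: (TV_neg lr) => [m|] //=.
move/first_natP: Hneg => [/andP [m1 Hm] _].
rewrite ltnNge; apply/negP => mn.
move: Hm; rewrite VnE ltNge; case: (ltnP m n) => mn'.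
  by have [] := H m mn' => ->.
have -> : m = n by apply/eqP; rewrite eqn_leq mn.
by rewrite (le_trans (ltW hp) hn).
Qed.

Lemma hit_ev lr n (B : nat -> set R) :
  ((exists q, hit_path lr h = Some q /\ cyl n B q) /\ lt_opt (TV_ge lr h) (TV_neg lr)) <->
  RB n B (sl lr).
Proof.
rewrite /hit_path; split.
  case Hg: (TV_ge lr h) => [t|]; last by move=> [[q []]].
  move=> [[q [[<-] /cyl_map [tn H]]] Hlt]; subst t.
  split; first by apply/cond_ev; rewrite Hg.
  by move=> k kn; rewrite -VnE; apply: H.
move=> [RA1 H]; have [Hg Hlt] := (cond_ev lr n).2 RA1.
rewrite Hg in Hlt *; split => //; eexists; split; first by [].
by apply/cyl_map; split => // k kn; rewrite VnE; apply: H.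
Qed.

Lemma condE lr : lt_opt (TV_ge lr h) (TV_neg lr) <-> RAall (sl lr).
Proof.
split.
  case Hg: (TV_ge lr h) => [n|] // Hlt; exists n; apply/cond_ev; by rewrite Hg.
by move=> [n /cond_ev [_]].
Qed.

Lemma Tfin_ev lr : Tup lr h <> None <-> exists m, LA h (sl lr) m /\ RAall (sh m (sl lr)).
Proof.
split.
  case Ht: (Tup lr h) => [t|] // _.
  have [m Hm] := m1_some _ _ Ht.
  have [n [_ [LA1 RA1]]] := (D1 h hp lr t m).1 (conj Ht Hm).
  by exists m; split => //; exists n.
move=> [m [LA1 [n RA1]]].
by have [-> _] := (D1 h hp lr (m + n) m).2 (ex_intro _ n (conj erefl (conj LA1 RA1))).
Qed.

Lemma LA_uniq s m m' : LA h s m -> RAall (sh m s) -> LA h s m' -> RAall (sh m' s) -> m = m'.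
Proof.
move=> LA1 [n RA1] LA2 [n' RA2].
pose lr := fun z : int => match z with Posz k => s k.-1 | _ => 0 end.
have sE : sl lr = s by [].
rewrite -sE in LA1 RA1 LA2 RA2.
have [_ Hm] := (D1 h hp lr (m + n) m).2 (ex_intro _ n (conj erefl (conj LA1 RA1))).
have [_ Hm'] := (D1 h hp lr (m' + n') m').2 (ex_intro _ n' (conj erefl (conj LA2 RA2))).
by rewrite Hm in Hm'; case: Hm'.
Qed.

End Ev.
Section Gen.
Context d' (U : measurableType d') (R : realType).


Lemma mall (Q : nat -> set U) : (forall k, measurable (Q k)) ->
  measurable [set x | forall k, Q k x].
Proof.
move=> mQ; have -> : [set x | forall k, Q k x] = \bigcap_k Q k.
  by apply/seteqP; split => x /= H k //; apply: H.
exact: bigcapT_measurable.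
Qed.

Lemma mimp (b : bool) (Q : set U) : (b -> measurable Q) -> measurable [set x | b -> Q x].
Proof.
case: b => H.
  have -> : [set x | true -> Q x] = Q by apply/seteqP; split => x /= //; apply.
  exact: H.
by have -> : [set x | false -> Q x] = setT by apply/seteqP; split => x /=.
Qed.

Lemma mand (Q1 Q2 : set U) : measurable Q1 -> measurable Q2 -> measurable [set x | Q1 x /\ Q2 x].
Proof. exact: measurableI. Qed.

Lemma mex (Q : nat -> set U) : (forall k, measurable (Q k)) ->
  measurable [set x | exists k, Q k x].
Proof.
move=> mQ; have -> : [set x | exists k, Q k x] = \bigcup_k Q k.
  by apply/seteqP; split => x /= [k]; exists k.
exact: bigcupT_measurable.
Qed.

Lemma mnot (Q : set U) : measurable Q -> measurable [set x | ~ Q x].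
Proof. exact: measurableC. Qed.

Lemma mpre (f : U -> R) (B : set R) : measurable_fun setT f -> measurable B ->
  measurable [set x | B (f x)].
Proof. by move=> mf mB; have := mf measurableT _ mB; rewrite setTI. Qed.

Lemma mlt (f g : U -> R) : measurable_fun setT f -> measurable_fun setT g ->
  measurable [set x | f x < g x].
Proof.
move=> mf mg.
have -> : [set x | f x < g x] = [set x | `]0, +oo[%classic ((g \- f) x)].
  by apply/seteqP; split => x /=; rewrite in_itv /= andbT subr_gt0.
apply: mpre; last exact: measurable_itv.
exact: measurable_realfun.measurable_funB.
Qed.

Lemma mle (f g : U -> R) : measurable_fun setT f -> measurable_fun setT g ->
  measurable [set x | f x <= g x].
Proof.
move=> mf mg.
have -> : [set x | f x <= g x] = [set x | ~ (g x < f x)].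
  apply/seteqP; split => x /=; first by rewrite ltNge => ->.
  by rewrite leNgt => /negP.
exact/mnot/mlt.
Qed.

Lemma mWf (c : U -> nat -> R) j :
  (forall i, (i < j)%N -> measurable_fun setT (fun x => c x i)) ->
  measurable_fun setT (fun x => W (c x) j).
Proof.
elim: j => [|j IH] H.
  have -> : (fun x => W (c x) 0) = cst 0 by apply/funext => x; rewrite W0.
  exact: measurable_cst.
have -> : (fun x => W (c x) j.+1) = (fun x => W (c x) j) \+ (fun x => c x j).
  by apply/funext => x; rewrite /W big_ord_recr.
apply: measurable_realfun.measurable_funD; last exact: H.
by apply: IH => i ij; apply: H; exact: ltnW.
Qed.

End Gen.
Section Arith.
Context {R : realType}.
Local Open Scope ereal_scope.

Lemma eser_scaleR (c : \bar R) (f : nat -> \bar R) : c \is a fin_num ->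
  (forall n, 0 <= f n) -> \sum_(n <oo) (f n * c) = c * \sum_(n <oo) f n.
Proof.
move=> fc f0; rewrite -[c]fineK // -nneseriesZl //.
by apply: eq_eseriesr => n _; rewrite muleC.
Qed.

Lemma L_fin (r L : \bar R) : r \is a fin_num -> 0 <= L -> r * L = 1 -> L \is a fin_num.
Proof.
move=> fr L0; rewrite -[r]fineK //; case: L L0 => [l| |] //= _.
rewrite mulry; case: sgrP => _.
- by rewrite mul0e => /eqP; rewrite eqe eq_sym oner_eq0.
- by rewrite mul1e.
- by rewrite EFinN mulN1e.
Qed.

Lemma final_ar (a b r : \bar R) (f : nat -> \bar R) :
  a \is a fin_num -> b \is a fin_num -> r \is a fin_num -> (forall n, 0 <= f n) ->
  \sum_(n <oo) (f n * r) = 1 -> a * b = (a * r) * \sum_(n <oo) (f n * b).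
Proof.
move=> fa fb fr f0; rewrite !eser_scaleR // => H.
have L0 : 0 <= \sum_(n <oo) f n by apply: nneseries_ge0 => n _.
have fL := L_fin _ _ fr L0 H.
move: H; rewrite -[a]fineK // -[b]fineK // -[r]fineK // -[\sum_(n <oo) f n]fineK //.
rewrite -!EFinM => -[H]; congr (_%:E).
set x := fine (\sum_(n <oo) f n) in H *.
have -> : (fine a * fine r * (fine b * x) = fine a * fine b * (fine r * x))%R by ring.
by rewrite H mulr1.
Qed.

Lemma final_ar2 (b r : \bar R) (f : nat -> \bar R) :
  b \is a fin_num -> r \is a fin_num -> (forall n, 0 <= f n) ->
  \sum_(n <oo) (f n * r) = 1 -> fine (\sum_(n <oo) (f n * b)) = (fine b / fine r)%R.
Proof.
move=> fb fr f0; rewrite !eser_scaleR // => H.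
have L0 : 0 <= \sum_(n <oo) f n by apply: nneseries_ge0 => n _.
have fL := L_fin _ _ fr L0 H.
move: H; rewrite -[b]fineK // -[r]fineK // -[\sum_(n <oo) f n]fineK //.
rewrite -!EFinM /= => -[H].
set x := fine (\sum_(n <oo) f n) in H *.
have r0 : fine r != 0%R by apply/eqP => r0; move: H; rewrite r0 mul0r => /eqP; rewrite eq_sym oner_eq0.
rewrite -[(fine b / fine r)%R]mul1r -H; field.
exact: r0.
Qed.

End Arith.
Definition seqR (R : realType) := nat -> R.
HB.instance Definition _ (R : realType) := gen_eqMixin (seqR R).
HB.instance Definition _ (R : realType) := gen_choiceMixin (seqR R).
HB.instance Definition _ (R : realType) := isPointed.Build (seqR R) (fun _ => 0).

Section Prob.
Context d (T : measurableType d) (R : realType) (P : probability T R) (lrho : int -> T -> R).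
Hypotheses (lrho_meas : forall i, measurable_fun setT (lrho i))
  (lrho_indep : mutual_indep P lrho) (lrho_ident : ident_distr P lrho).

Local Notation S := (seqR R).

Definition rect N (B : nat -> set R) : set S := [set s | forall i, (i < N)%N -> B i (s i)].
Definition Gr : set (set S) :=
  [set A | exists N B, (forall i, measurable (B i)) /\ A = rect N B].
Definition Gm m : set (set S) := [set A | exists B, (forall i, measurable (B i)) /\ A = rect m B].
Definition Xo (w : T) : S := fun i => lrho (i.+1)%:Z w.
Definition Pm (A : set S) := P (Xo @^-1` A).
Local Notation SG := (g_sigma_algebraType Gr).

Lemma lrho_pre i B : measurable B -> measurable (lrho i @^-1` B).
Proof. by move=> mB; have := lrho_meas i measurableT _ mB; rewrite setTI. Qed.

Lemma Xo_rect N B : (forall i, measurable (B i)) -> measurable (Xo @^-1` rect N B).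
Proof.
move=> mB.
have -> : Xo @^-1` rect N B =
    \bigcap_i (if (i < N)%N then lrho (i.+1)%:Z @^-1` B i else setT).
  apply/seteqP; split => w /=.
    by move=> H i _; case: ifP => // iN; exact: (H i iN).
  by move=> H i iN; have := H i Logic.I; rewrite iN; apply.
apply: bigcapT_measurable => i; case: ifP => _ //; exact: lrho_pre.
Qed.

Lemma Pm_rect N B : (forall i, measurable (B i)) ->
  Pm (rect N B) = (\prod_(i < N) P (lrho 0%Z @^-1` B i))%E.
Proof.
move=> mB.
pose I := [seq (i.+1)%:Z | i <- iota 0 N].
pose B' := fun z : int => B (absz z).-1.
have uI : uniq I.
  rewrite map_inj_uniq ?iota_uniq // => i j /= [] //.
have mB' : forall z, measurable (B' z) by move=> z; exact: mB.
have := lrho_indep I B' uI mB'.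
have -> : \bigcap_(i in [set` I]) (lrho i @^-1` B' i) = Xo @^-1` rect N B.
  apply/seteqP; split => w /= H.
    move=> i iN; have := H (i.+1)%:Z; apply.
    by rewrite /= map_f // mem_iota.
  move=> z /mapP [i]; rewrite mem_iota add0n => /andP[_ iN] ->.
  exact: H.
rewrite /Pm => ->; rewrite big_map.
have -> : iota 0 N = index_iota 0 N by rewrite /index_iota subn0.
rewrite big_mkord.
by apply: eq_bigr => i _; rewrite /B' lrho_ident.
Qed.

Lemma rect_cat m N B C :
  rect m B `&` (sh m @^-1` rect N C) =
  rect (m + N) (fun i => if (i < m)%N then B i else C (i - m)%N).
Proof.
apply/seteqP; split => s /=.
  move=> [HB HC] i iN; case: ifP => im; first exact: HB.
  have := HC (i - m)%N; rewrite /sh subnKC; last by rewrite leqNgt im.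
  by apply; rewrite ltn_subLR // leqNgt im.
move=> H; split.
  by move=> i im; have := H i; rewrite im; apply; exact: ltn_addr.
move=> i iN; have := H (m + i)%N; rewrite ltn_add2l (ltnNge (m + i) m) leq_addr /= addKn.
by apply.
Qed.

Lemma Pm_cat m N B C : (forall i, measurable (B i)) -> (forall i, measurable (C i)) ->
  Pm (rect m B `&` (sh m @^-1` rect N C)) = (Pm (rect m B) * Pm (rect N C))%E.
Proof.
move=> mB mC; rewrite rect_cat !Pm_rect //; last first.
  by move=> i /=; case: ifP.
rewrite big_split_ord /=; congr (_ * _)%E.
  by apply: eq_bigr => i _; rewrite ltn_ord.
by apply: eq_bigr => i _; rewrite ltnNge leq_addr /= addKn.
Qed.

Lemma Xo_measG : @measurable_fun _ _ T SG setT Xo.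
Proof.
apply: (@measurability _ _ _ SG _ _ Gr) => //.
by move=> _ [A [N [B [mB ->]]] <-]; rewrite setTI; exact: Xo_rect.
Qed.

Lemma XoG (A : set S) : <<s Gr >> A -> measurable (Xo @^-1` A).
Proof. by move=> HA; have := Xo_measG measurableT _ HA; rewrite setTI. Qed.

Arguments XoG [A].

Lemma sh_measG m : @measurable_fun _ _ SG SG setT (sh m).
Proof.
apply: (@measurability _ _ _ SG _ _ Gr) => //.
move=> _ [A [N [C [mC ->]]] <-]; rewrite setTI.
have -> : sh m @^-1` rect N C = rect m (fun _ => setT) `&` sh m @^-1` rect N C.
  by apply/seteqP; split => s /= //; case.
rewrite (rect_cat m N (fun _ => setT) C); apply: sub_sigma_algebra; exists (m + N)%N; eexists; split; last by [].
by move=> i /=; case: ifP.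
Qed.

Lemma shG m (A : set S) : <<s Gr >> A -> <<s Gr >> (sh m @^-1` A).
Proof. by move=> HA; have := sh_measG m measurableT _ HA; rewrite setTI. Qed.

Arguments shG m [A].

Lemma GmG m (A : set S) : <<s Gm m >> A -> <<s Gr >> A.
Proof.
apply: sub_sigma_algebra2 => _ [B [mB ->]]; by exists m, B.
Qed.

Arguments GmG m [A].

Lemma Pfin (E : set T) : measurable E -> P E = (fine (P E))%:E.
Proof.
move=> mE; rewrite fineK // ge0_fin_numE //.
exact: le_lt_trans (probability_le1 P mE) (ltey 1).
Qed.

Arguments Pfin [E].

Lemma P_bigcup (F : nat -> set T) : (forall n, measurable (F n)) -> trivIset setT F ->
  P (\bigcup_n F n) = (\sum_(n <oo) P (F n))%E.
Proof.
move=> mF tF; apply: measure_semi_bigcup => //.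
exact: bigcup_measurable.
Qed.

Lemma Gr_setI : setI_closed Gr.
Proof.
move=> _ _ [N1 [B1 [mB1 ->]]] [N2 [B2 [mB2 ->]]].
exists (maxn N1 N2), (fun i => (if (i < N1)%N then B1 i else setT) `&`
                               (if (i < N2)%N then B2 i else setT)).
split; first by move=> i; apply: measurableI; case: ifP.
apply/seteqP; split => s /=.
  move=> [H1 H2] i _; split; case: ifP => // ?; [exact: H1|exact: H2].
move=> H; split => i iN.
  by have := H i; rewrite iN leq_max iN => /(_ isT) [].
by have := H i; rewrite iN leq_max iN orbT => /(_ isT) [].
Qed.

Lemma Gm_setI m : setI_closed (Gm m).
Proof.
move=> _ _ [B1 [mB1 ->]] [B2 [mB2 ->]].
exists (fun i => B1 i `&` B2 i); split; first by move=> i; exact: measurableI.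
apply/seteqP; split => s /=.
  by move=> [H1 H2] i iN; split; [exact: H1|exact: H2].
by move=> H; split => i iN; have [] := H i iN.
Qed.

Lemma PmT : Pm setT = 1%E.
Proof. by rewrite /Pm preimage_setT probability_setT. Qed.

Lemma rectT m : rect m (fun _ => setT) = setT.
Proof. by apply/seteqP; split => s. Qed.

Lemma Pfin' (E : set T) : measurable E -> P E \is a fin_num.
Proof.
move=> mE; rewrite ge0_fin_numE //.
exact: le_lt_trans (probability_le1 P mE) (ltey 1).
Qed.

Lemma Pm_fin (A : set S) : <<s Gr >> A -> Pm A \is a fin_num.
Proof. by move=> HA; apply: Pfin'; exact: XoG. Qed.

Arguments Pm_fin [A].

Lemma Pm_ge0 (A : set S) : (0 <= Pm A)%E.
Proof. exact: measure_ge0. Qed.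

Lemma PmC (A : set S) : <<s Gr >> A -> Pm (~` A) = (1 - Pm A)%E.
Proof. by move=> HA; rewrite /Pm -preimage_setC probability_setC //; exact: XoG. Qed.

Arguments PmC [A].

Lemma PmD (A B : set S) : <<s Gr >> A -> <<s Gr >> B ->
  Pm (A `&` ~` B) = (Pm A - Pm (A `&` B))%E.
Proof.
move=> HA HB; rewrite /Pm preimage_setI -preimage_setC -setDE measureD.
- by rewrite preimage_setI.
- exact: XoG.
- exact: XoG.
- by rewrite -ge0_fin_numE //; apply: Pfin'; exact: XoG.
Qed.

Arguments PmD [A B].

Lemma Pm_bigcup (F : nat -> set S) : (forall n, <<s Gr >> (F n)) -> trivIset setT F ->
  Pm (\bigcup_n F n) = (\sum_(n <oo) Pm (F n))%E.
Proof.
move=> HF tF; rewrite /Pm preimage_bigcup P_bigcup //.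
- by move=> n; exact: XoG.
- by move=> i j _ _ [w [Hi Hj]]; apply: tF => //; exists (Xo w).
Qed.

Lemma eser_scale (a : \bar R) (f : nat -> \bar R) : a \is a fin_num ->
  (forall n, (0 <= f n)%E) -> (\sum_(n <oo) (a * f n) = a * \sum_(n <oo) f n)%E.
Proof. by move=> fa f0; rewrite -[a]fineK // nneseriesZl. Qed.

Lemma ar1 (a b : \bar R) : a \is a fin_num -> b \is a fin_num ->
  (a - a * b = a * (1 - b))%E.
Proof.
move=> fa fb; rewrite -[a]fineK // -[b]fineK //.
by rewrite -EFinM -EFinB -EFinB -EFinM; congr (_%:E); ring.
Qed.

Lemma rectG m B : (forall i, measurable (B i)) -> <<s Gr >> (rect m B).
Proof. by move=> mB; apply: sub_sigma_algebra; exists m, B. Qed.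

Lemma indep1 m B0 (Bs : set S) : (forall i, measurable (B0 i)) -> <<s Gr >> Bs ->
  Pm (rect m B0 `&` sh m @^-1` Bs) = (Pm (rect m B0) * Pm Bs)%E.
Proof.
move=> mB0; move: Bs; apply: (@dynkin_induction _ SG Gr) => //.
- exact: Gr_setI.
- by rewrite preimage_setT setIT PmT mule1.
- by move=> _ [N [C [mC ->]]]; exact: Pm_cat.
- move=> X mX HX.
  have mR := rectG m B0 mB0.
  rewrite -preimage_setC (PmD mR (shG m mX)) HX (PmC mX).
  by apply: ar1; apply: Pm_fin.
- move=> F mF tF HF.
  have mR := rectG m B0 mB0.
  rewrite preimage_bigcup setI_bigcupr Pm_bigcup; last 2 first.
  + by move=> n; apply: (@measurableI _ SG); [exact: mR|exact: (shG m (mF n))].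
  + by move=> i j _ _ [s [[_ Hi] [_ Hj]]]; apply: tF => //; exists (sh m s).
  rewrite Pm_bigcup //.
  rewrite -eser_scale; [|exact: Pm_fin|by move=> n; exact: Pm_ge0].
  by apply: eq_eseriesr => n _; rewrite HF.
Qed.

Lemma shift_inv m (Bs : set S) : <<s Gr >> Bs -> Pm (sh m @^-1` Bs) = Pm Bs.
Proof.
move=> HB; have := indep1 m (fun _ => setT) Bs (fun _ => measurableT) HB.
by rewrite rectT setTI PmT mul1e.
Qed.

Lemma indep m (A Bs : set S) : <<s Gm m >> A -> <<s Gr >> Bs ->
  Pm (A `&` sh m @^-1` Bs) = (Pm A * Pm Bs)%E.
Proof.
move=> HA HB; move: A HA; apply: (@dynkin_induction _ (g_sigma_algebraType (Gm m)) (Gm m)) => //.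
- exact: Gm_setI.
- by rewrite setTI PmT mul1e shift_inv.
- by move=> _ [B0 [mB0 ->]]; exact: indep1.
- move=> X mX HX.
  have mX' := GmG m mX.
  have mS := shG m HB.
  rewrite setIC (PmD mS mX') setIC HX shift_inv // (PmC mX').
  rewrite muleC [X in _ = X]muleC.
  by apply: ar1; apply: Pm_fin.
- move=> F mF tF HF.
  rewrite setI_bigcupl Pm_bigcup; last 2 first.
  + by move=> n; apply: (@measurableI _ SG); [exact: GmG (mF n)|exact: (shG m HB)].
  + by move=> i j _ _ [s [[Hi _] [Hj _]]]; apply: tF => //; exists s.
  rewrite Pm_bigcup //; last by move=> n; exact: GmG (mF n).
  rewrite muleC -eser_scale; [|exact: Pm_fin|by move=> n; exact: Pm_ge0].
  by apply: eq_eseriesr => n _; rewrite HF muleC.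
Qed.

Local Notation SM m := (g_sigma_algebraType (Gm m)).

Lemma coordM m i : (i < m)%N -> @measurable_fun _ _ (SM m) R setT (fun s => s i).
Proof.
move=> im _ Y mY; rewrite setTI; apply: sub_sigma_algebra.
exists (fun j => if j == i then Y else setT); split; first by move=> j; case: eqP.
apply/seteqP; split => s /=.
  by move=> Hs j jm; case: eqP => // ->.
by move=> H; have := H i im; rewrite eqxx.
Qed.

Variable h : R.
Hypothesis hp : 0 < h.

Lemma mWM m j : (j <= m)%N -> @measurable_fun _ _ (SM m) R setT (fun s => W s j).
Proof.
move=> jm; apply: (@mWf _ (SM m) R (fun x => x)) => i ij.
by apply: coordM; exact: leq_trans ij jm.
Qed.

Lemma mWBM m j k : (j <= m)%N -> (k <= m)%N ->
  @measurable_fun _ _ (SM m) R setT (fun s => W s j - W s k).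
Proof.
move=> jm km.
exact: (measurable_realfun.measurable_funB (mWM m j jm) (mWM m k km)).
Qed.

Lemma mcstM m (c : R) : @measurable_fun _ _ (SM m) R setT (fun _ => c).
Proof. exact: measurable_cst. Qed.

Lemma LA_meas m : @measurable _ (SM m) [set s | LA h s m].
Proof.
rewrite /LA; apply: mand.
  apply: mall => j; apply: mimp => jm; apply: mlt; apply: mWM => //; exact: ltnW.
apply: mall => i; apply: mall => j; apply: mimp => ij; apply: mimp => jm.
apply: mlt; first by apply: mWBM => //; exact: leq_trans ij jm.
exact: mcstM.
Qed.

Lemma RA_meas n : @measurable _ (SM n) [set u | RA h u n].
Proof.
rewrite /RA; apply: mand; last by apply: mle; [exact: mcstM|exact: mWM].
apply: mall => k; apply: mimp => kn; apply: mand.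
  by apply: mle; [exact: mcstM|apply: mWM; exact: ltnW].
by apply: mlt; [apply: mWM; exact: ltnW|exact: mcstM].
Qed.

Lemma RB_meas n (B : nat -> set R) : (forall k, measurable (B k)) ->
  @measurable _ (SM n) [set u | RB h n B u].
Proof.
move=> mB; rewrite /RB; apply: mand; first exact: RA_meas.
apply: mall => k; apply: mimp => kn; apply: mpre; last exact: mB.
exact: mWM.
Qed.

Lemma A1_meas n (B : nat -> set R) : (forall k, measurable (B k)) ->
  @measurable _ (SM n) [set s | LA h s n /\ forall k, (k <= n)%N -> B k (W s (n - k) - W s n)].
Proof.
move=> mB; apply: mand; first exact: LA_meas.
apply: mall => k; apply: mimp => kn; apply: mpre; last exact: mB.
by apply: mWBM; rewrite ?leq_subr.
Qed.

Lemma RAall_meas : <<s Gr >> [set u | RAall h u].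
Proof.
apply: (@mex _ SG) => n; exact: (GmG n (RA_meas n)).
Qed.

Lemma LAG m : <<s Gr >> [set s | LA h s m].
Proof. exact: (GmG m (LA_meas m)). Qed.

Definition Tset := [set s : S | exists m, LA h s m /\ RAall h (sh m s)].

Lemma TsetE : Tset = \bigcup_m ([set s | LA h s m] `&` sh m @^-1` [set u | RAall h u]).
Proof. by apply/seteqP; split => s /= [m Hm]; exists m. Qed.

Lemma Tset_pieces : Pm Tset = (\sum_(m <oo) Pm [set s | LA h s m] * Pm [set u | RAall h u])%E.
Proof.
rewrite TsetE Pm_bigcup.
- by apply: eq_eseriesr => m _; rewrite indep //; [exact: LA_meas|exact: RAall_meas].
- move=> m; apply: (@measurableI _ SG); first exact: LAG.
  exact: (shG m RAall_meas).
- move=> i j _ _ [s [[LAi RAi] [LAj RAj]]].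
  exact: (LA_uniq h hp _ _ _ LAi RAi LAj RAj).
Qed.

Lemma Tset_up (s : S) : Tset s <-> exists x, up h s x.
Proof.
pose lr := fun z : int => match z with Posz k => s k.-1 | _ => 0 end.
have sE : sl lr = s by [].
change ((exists m, LA h (sl lr) m /\ RAall h (sh m (sl lr))) <-> exists x, up h (sl lr) x).
rewrite -(Tfin_ev h hp lr).
split.
  case Ht: (Tup lr h) => [t|] // _; move/first_natP: Ht => [/VupE H _].
  by exists t; apply: H.
move=> [x Hx]; rewrite /Tup.
have [t ->] := first_natS (fun x => h <= Vup lr x) x (proj2 (VupE h hp lr x) Hx).
by [].
Qed.

Hypothesis pos_step : (0 < P [set w | (0 < lrho 0%Z w)%R])%E.

Lemma eps_exists : exists2 e : R, 0 < e & (0 < P (lrho 0%Z @^-1` `]e, +oo[%classic))%E.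
Proof.
case: (pselect (exists2 e : R, 0 < e & (0 < P (lrho 0%Z @^-1` `]e, +oo[%classic))%E)) => // Hn.
have H0 k : P (lrho 0%Z @^-1` `]((k.+1%:R)^-1)%R, +oo[%classic) = 0%E.
  apply/eqP; rewrite eq_le measure_ge0 andbT leNgt; apply/negP => Hk.
  by apply: Hn; exists (k.+1%:R)^-1 => //; rewrite invr_gt0 ltr0n.
have : (P [set w | (0 < lrho 0%Z w)%R] <=
    \sum_(k <oo) P (lrho 0%Z @^-1` `]((k.+1%:R)^-1)%R, +oo[%classic))%E.
  apply: measure_sigma_subadditive.
  - by move=> k; apply: lrho_pre; exact: measurable_itv.
  - have -> : [set w | (0 < lrho 0%Z w)%R] = lrho 0%Z @^-1` `]0, +oo[%classic.
      by apply/seteqP; split => w /=; rewrite in_itv /= andbT.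
    by apply: lrho_pre; exact: measurable_itv.
  - move=> w /= x0.
    have xi : 0 <= (lrho 0%Z w)^-1 by rewrite invr_ge0 ltW.
    exists (Num.Def.archi_bound (lrho 0%Z w)^-1) => //=.
    rewrite in_itv /= andbT invf_plt ?posrE ?ltr0n //.
    apply: (lt_trans (archi_boundP xi)); by rewrite ltr_nat.
rewrite eseries0; last by move=> k _ _; rewrite H0.
by rewrite leNgt pos_step.
Qed.

Lemma fin_real (x q : R) : 0 < q -> q <= 1 -> 0 <= x ->
  (forall N : nat, x <= (1 - q) ^+ N) -> x = 0.
Proof.
move=> q0 q1 x0 H.
have bern N : (1 - q) ^+ N * (1 + N%:R * q) <= 1.
  elim: N => [|N IH]; first by rewrite expr0 mul0r addr0 mulr1.
  have e0 : 0 <= (1 - q) ^+ N by apply: exprn_ge0; rewrite subr_ge0.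
  rewrite exprSr -natr1.
  have : (1 - q) ^+ N * ((1 - q) * (1 + (N%:R + 1) * q)) <= (1 - q) ^+ N * (1 + N%:R * q).
    apply: ler_wpM2l => //.
    have hN : (0:R) <= N%:R := ler0n _ _.
    have : 0 <= (N%:R + 1) * (q * q) by apply: mulr_ge0; [lra|nra].
    nra.
  move=> Hle; apply: le_trans IH; apply: le_trans Hle; rewrite mulrA.
  by rewrite le_eqVlt eqxx.
apply/eqP; rewrite eq_le x0 andbT leNgt; apply/negP => xp.
have xq : 0 <= (x * q)^-1 by rewrite invr_ge0 mulr_ge0 // ltW.
set N := Num.Def.archi_bound (x * q)^-1.
have HN : (x * q)^-1 < N%:R := archi_boundP xq.
have : 1 < N%:R * (x * q).
  by rewrite -ltr_pdivrMr ?mulr_gt0 // div1r.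
have := H N; have := bern N => b1 b2.
have : x * (1 + N%:R * q) <= 1.
  apply: le_trans b1; apply: ler_wpM2r => //.
  by rewrite addr_ge0 // mulr_ge0 // ltW.
nra.
Qed.

Lemma sum_const_ord n (c : R) : \sum_(i < n) c = n%:R * c.
Proof.
elim: n => [|n IH]; first by rewrite big_ord0 mul0r.
by rewrite big_ord_recr /= IH -natr1 mulrDl mul1r.
Qed.

Lemma prod_const_ord n (c : R) : (\prod_(i < n) c%:E)%E = (c ^+ n)%:E.
Proof.
elim: n => [|n IH]; first by rewrite big_ord0 expr0.
by rewrite big_ord_recr /= IH exprSr EFinM.
Qed.

Lemma TsetG : <<s Gr >> Tset.
Proof.
rewrite TsetE; apply: (@bigcupT_measurable _ SG) => m.
apply: (@measurableI _ SG); first exact: LAG.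
exact: (shG m RAall_meas).
Qed.

Lemma Tset_one : Pm Tset = 1%E.
Proof.
have [e e0 Pe] := eps_exists.
set pE := P (lrho 0%Z @^-1` `]e, +oo[%classic) in Pe.
have mpE : measurable (lrho 0%Z @^-1` `]e, +oo[%classic) by apply: lrho_pre; exact: measurable_itv.
have pEE : pE = (fine pE)%:E by rewrite /pE (Pfin mpE).
set p := fine pE in pEE.
have p0 : 0 < p by rewrite -lte_fin -pEE.
have p1 : p <= 1 by rewrite -lee_fin -pEE /pE; exact: probability_le1.
have he0 : 0 <= h / e by rewrite divr_ge0 // ltW.
set K := Num.Def.archi_bound (h / e).
have hK : h < K%:R * e by rewrite -ltr_pdivrMr //; exact: archi_boundP.
pose Be := fun _ : nat => `]e, +oo[%classic.
have mBe : forall i, measurable (Be i) by move=> i; exact: measurable_itv.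
pose D := rect K Be.
have PmDE : Pm D = ((p ^+ K)%:E)%E.
  rewrite /D Pm_rect // -prod_const_ord; apply: eq_bigr => i _; exact: pEE.
have DG : <<s Gr >> D by exact: rectG.
have DCG : <<s Gr >> (~` D) by exact: (@measurableC _ SG _ DG).
pose E N := [set s : S | forall j, (j < N)%N -> ~ D (sh (j * K) s)].
have EM N : @measurable _ (SM (N * K)) (E N).
  apply: mall => j; apply: mimp => jN; apply: mnot.
  rewrite /D /rect /sh /=.
  apply: mall => i; apply: mimp => iK; apply: mpre; last exact: mBe.
  by apply: coordM; nia.
have PmE N : Pm (E N) = (((1 - p ^+ K) ^+ N)%:E)%E.
  elim: N => [|N IH].
    have -> : E 0%N = setT by apply/seteqP; split => s //=.
    by rewrite PmT expr0.
  have -> : E N.+1 = E N `&` sh (N * K) @^-1` (~` D).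
    apply/seteqP; split => s /=.
      by move=> H; split; [move=> j jN; apply: H; exact: ltnW|apply: H].
    move=> [H1 H2] j; rewrite ltnS leq_eqVlt => /orP[/eqP ->|jN] //.
    exact: H1.
  rewrite (indep _ _ _ (EM N) DCG).
  by rewrite IH (PmC DG) PmDE -EFinB -EFinM exprSr.
have sub N : ~` Tset `<=` E N.
  move=> s nT j jN Dj; apply: nT; apply/Tset_up.
  exists (j * K + K)%N, (j * K)%N, (j * K + K)%N; split => //; first exact: leq_addr.
  rewrite W_sh addrAC subrr add0r; apply: (le_trans (ltW hK)).
  rewrite -sum_const_ord /W; apply: ler_sum => i _.
  have := Dj i (ltn_ord i); rewrite /Be /sh /= in_itv /= andbT.
  exact: ltW.
have TCG : <<s Gr >> (~` Tset) by exact: (@measurableC _ SG _ TsetG).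
have le N : fine (Pm (~` Tset)) <= (1 - p ^+ K) ^+ N.
  rewrite -lee_fin -(Pfin (XoG TCG)) -PmE.
  apply: le_measure; rewrite ?inE; [exact: XoG|exact: XoG (GmG _ (EM N))|].
  by move=> w /=; apply: sub.
have q0 : 0 < p ^+ K by exact: exprn_gt0.
have q1 : p ^+ K <= 1 by apply: exprn_ile1 => //; exact: ltW.
have f0 : 0 <= fine (Pm (~` Tset)) by rewrite fine_ge0 // Pm_ge0.
have := fin_real _ _ q0 q1 f0 le => H0.
have H1 : Pm (~` Tset) = 0%E.
  have E1 : Pm (~` Tset) = (fine (Pm (~` Tset)))%:E := Pfin (XoG TCG).
  by rewrite E1 H0.
by rewrite -(setCK Tset) (PmC TCG) H1 sube0.
Qed.

Definition A1s n (B : nat -> set R) :=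
  [set s : S | LA h s n /\ forall k, (k <= n)%N -> B k (W s (n - k) - W s n)].
Definition RAs := [set u : S | RAall h u].
Definition RBs n (B : nat -> set R) := [set u : S | RB h n B u].
Definition LAs m := [set s : S | LA h s m].

Lemma E1 n1 B1 : pev (fun w => left_path (fun i => lrho i w) h) (cyl n1 B1) =
  Xo @^-1` (A1s n1 B1 `&` sh n1 @^-1` RAs).
Proof.
apply/seteqP; split => w /=.
  by move=> /(left_ev h hp (fun i => lrho i w) n1 B1) [LA1 H1 RA1].
by move=> [[LA1 H1] RA1]; apply/(left_ev h hp (fun i => lrho i w) n1 B1).
Qed.

Lemma E2 n2 B2 : pev (fun w => right_path (fun i => lrho i w) h) (cyl n2 B2) =
  Xo @^-1` (\bigcup_m (LAs m `&` sh m @^-1` RBs n2 B2)).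
Proof.
apply/seteqP; split => w /=.
  by move=> /(right_ev h hp (fun i => lrho i w) n2 B2) [m Hm]; exists m.
by move=> [m _ Hm]; apply/(right_ev h hp (fun i => lrho i w) n2 B2); exists m.
Qed.

Lemma E3 n1 n2 B1 B2 : pev (fun w => left_path (fun i => lrho i w) h) (cyl n1 B1) `&`
  pev (fun w => right_path (fun i => lrho i w) h) (cyl n2 B2) =
  Xo @^-1` (A1s n1 B1 `&` sh n1 @^-1` RBs n2 B2).
Proof.
apply/seteqP; split => w /=.
  by move=> /(joint_ev h hp (fun i => lrho i w) n1 n2 B1 B2) [LA1 H1 RB1].
by move=> [[LA1 H1] RB1]; apply/(joint_ev h hp (fun i => lrho i w) n1 n2 B1 B2).
Qed.

Lemma E4 n B : pev (fun w => hit_path (fun i => lrho i w) h) (cyl n B) `&`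
  [set w | lt_opt (TV_ge (fun i => lrho i w) h) (TV_neg (fun i => lrho i w))] =
  Xo @^-1` RBs n B.
Proof.
apply/seteqP; split => w /=.
  by move=> /(hit_ev h hp (fun i => lrho i w) n B).
by move=> H; apply/(hit_ev h hp (fun i => lrho i w) n B).
Qed.

Lemma E5 : [set w | lt_opt (TV_ge (fun i => lrho i w) h) (TV_neg (fun i => lrho i w))] =
  Xo @^-1` RAs.
Proof.
apply/seteqP; split => w /=.
  by move=> /(condE h hp (fun i => lrho i w)).
by move=> H; apply/(condE h hp (fun i => lrho i w)).
Qed.

Lemma right_prob n2 B2 : (forall k, measurable (B2 k)) ->
  Pm (\bigcup_m (LAs m `&` sh m @^-1` RBs n2 B2)) =
  (\sum_(m <oo) (Pm (LAs m) * Pm (RBs n2 B2)))%E.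
Proof.
move=> mB; rewrite Pm_bigcup.
- apply: eq_eseriesr => m _; rewrite indep //; first exact: LA_meas.
  exact: (GmG _ (RB_meas n2 B2 mB)).
- move=> m; apply: (@measurableI _ SG); first exact: LAG.
  exact: (shG m (GmG _ (RB_meas n2 B2 mB))).
- move=> i j _ _ [s [[LAi [RAi _]] [LAj [RAj _]]]].
  apply: (LA_uniq h hp _ _ _ LAi _ LAj); [by exists n2|by exists n2].
Qed.

Lemma sum_one : (\sum_(m <oo) (Pm (LAs m) * Pm RAs))%E = 1%E.
Proof. by rewrite -Tset_one Tset_pieces. Qed.

Lemma main_res :
  let left_proc := fun w => left_path (fun i => lrho i w) h in
  let right_proc := fun w => right_path (fun i => lrho i w) h in
  let V_proc := fun w => hit_path (fun i => lrho i w) h in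
  let cond_ev := [set w | lt_opt (TV_ge (fun i => lrho i w) h) (TV_neg (fun i => lrho i w))] in
  paths_indep P left_proc right_proc /\
  path_law_cond P right_proc V_proc cond_ev.
Proof.
move=> lp rp vp ce; rewrite /lp /rp /vp /ce; split.
  move=> n1 n2 B1 B2 mB1 mB2.
  rewrite E3 E1 E2.
  change (Pm (A1s n1 B1 `&` sh n1 @^-1` RBs n2 B2) =
    (Pm (A1s n1 B1 `&` sh n1 @^-1` RAs) * Pm (\bigcup_m (LAs m `&` sh m @^-1` RBs n2 B2)))%E).
  rewrite right_prob // !indep //.
  - apply: final_ar.
    + exact: Pm_fin (GmG _ (A1_meas n1 B1 mB1)).
    + exact: Pm_fin (GmG _ (RB_meas n2 B2 mB2)).
    + exact: Pm_fin RAall_meas.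
    + by move=> m; exact: Pm_ge0.
    + exact: sum_one.
  - exact: (A1_meas n1 B1 mB1).
  - exact: RAall_meas.
  - exact: (A1_meas n1 B1 mB1).
  - exact: (GmG _ (RB_meas n2 B2 mB2)).
move=> n B mB; rewrite /cond_prob E4 E5 E2.
change (fine (Pm (\bigcup_m (LAs m `&` sh m @^-1` RBs n B))) =
   fine (Pm (RBs n B)) / fine (Pm RAs)).
rewrite right_prob //.
apply: final_ar2.
- exact: Pm_fin (GmG _ (RB_meas n B mB)).
- exact: Pm_fin RAall_meas.
- by move=> m; exact: Pm_ge0.
- exact: sum_one.
Qed.

End Prob.

Theorem proposition5p2 (d : measure_display) (T : measurableType d) (R : realType)
  (P : probability T R) (lrho : int -> T -> R)
  (lrho_meas : forall i, measurable_fun setT (lrho i))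
  (lrho_indep : mutual_indep P lrho)
  (lrho_ident : ident_distr P lrho)
  (pos_step : (0 < P [set w | (0 < lrho 0%Z w)%R])%E)
  (neg_step : (0 < P [set w | (lrho 0%Z w < 0)%R])%E)
  (liminf_V : {ae P, forall w,
     limn_einf (fun n => (Vn (fun i => lrho i w) n)%:E) = -oo%E})
  (h : R) (h_pos : 0 < h) :
  let left_proc := fun w => left_path (fun i => lrho i w) h in
  let right_proc := fun w => right_path (fun i => lrho i w) h in
  let V_proc := fun w => hit_path (fun i => lrho i w) h in
  let cond_ev := [set w | lt_opt (TV_ge (fun i => lrho i w) h) (TV_neg (fun i => lrho i w))] in
  paths_indep P left_proc right_proc /\
  path_law_cond P right_proc V_proc cond_ev.
Proof.
exact: (@main_res _ _ _ _ _ lrho_meas lrho_indep lrho_ident _ h_pos pos_step).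
Qed.
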